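(* Let $0<c\le a_2$. Any partial listing $\phi$ of $A$ becomes $K_c$-connected after at most $c-2$ further calls to Next$(\varnothing)$.
   Context: Let $k\ge 2$ and let $a_k,\dots,a_2$ be positive integers with $a_2\le a_i$ for all $2<i\le k$. Let $A=[a_k]\times\cdots\times[a_2]$, where $[a]=\{0,\dots,a-1\}$; elements are written $\alpha=\alpha_k\alpha_{k-1}\cdots\alpha_2$. A prefix of $\alpha$ is $\alpha_k\cdots\alpha_{l+1}$ for some $2\le l+1\le k$; $\varnothing$ denotes the empty prefix; for a tuple $\beta=\alpha_k\cdots\alpha_{l+1}$ and $i$, $\beta i$ denotes $\alpha_k\cdots\alpha_{l+1}i$. An array $\phi:A\to\{0,1\}$ is initialized to $0$ everywhere. A tuple $\beta$ (a prefix or an element) is non-empty if some $\alpha\in A$ having $\beta$ as a prefix (or equal to $\beta$) has $\phi(\alpha)=1$, empty otherwise, and full if all such $\alpha$ have $\phi(\alpha)=1$. The procedure Next$(\beta)$, for $\beta=\alpha_k\cdots\alpha_{l+1}$ (with $l=k$ for $\beta=\varnothing$): let $m$ be the least $i$ such that $\beta i$ is empty; if $l=2$, set $\phi(\beta m):=1$ and stop; otherwise, if $m\ge a_2$, replace $m$ by the least $i$ such that $\beta i$ is not full; then call Next$(\beta m)$. A partial listing of $A$ is an array $\phi$ obtained from the all-zero array by finitely many calls of Next$(\varnothing)$. For $0<c\le a_2$, a partial listing $\phi$ is $K_c$-connected if for every prefix $\alpha'$ (for which $\alpha'1$ is defined), whenever $\alpha'1$ is non-empty, $\alpha'(c-1)$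 is also non-empty. *)

(* Defs.v *)
From mathcomp Require Import all_boot.
Set Implicit Arguments. Unset Strict Implicit. Unset Printing Implicit Defensive.

(* The bounds a_k, ..., a_2 are given by a function [a : nat -> nat]
   (only a 2, ..., a k matter).  A tuple beta = alpha_k alpha_(k-1) ... alpha_(l+1)
   is represented by the sequence [:: alpha_k; alpha_(k-1); ...; alpha_(l+1)],
   so position j (0-based) carries coordinate index k - j, and
   l = k - size beta.  Elements of A are sequences of size k - 1.
   An array phi : A -> {0,1} is represented by [phi : seq nat -> bool]; only
   its values on elements of A are ever inspected. *)

Definition listing := seq nat -> bool.

Definition in_range (a : nat -> nat) (k : nat) (b : seq nat) : bool :=
  all (fun j => nth 0 b j < a (k - j)) (iota 0 (size b)).

Definition is_elem (a : nat -> nat) (k : nat) (alpha : seq nat) : bool :=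
  (size alpha == k.-1) && in_range a k alpha.

Definition nonempty (a : nat -> nat) (k : nat) (phi : listing) (beta : seq nat) : Prop :=
  exists alpha, [/\ is_elem a k alpha, prefix beta alpha & phi alpha].

Definition empty a k phi beta : Prop := ~ nonempty a k phi beta.

Definition full (a : nat -> nat) (k : nat) (phi : listing) (beta : seq nat) : Prop :=
  forall alpha, is_elem a k alpha -> prefix beta alpha -> phi alpha.

Definition least_empty a k phi beta (m : nat) : Prop :=
  empty a k phi (rcons beta m) /\ forall i, i < m -> nonempty a k phi (rcons beta i).

Definition least_nonfull a k phi beta (m : nat) : Prop :=
  ~ full a k phi (rcons beta m) /\ forall i, i < m -> full a k phi (rcons beta i).

Definition set1 (phi : listing) (x : seq nat) : listing :=
  fun y => (y == x) || phi y.

(* NextR a k phi beta phi' : the call Next(beta) on the array phi terminates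
   with array phi'.  Here l = k - size beta. *)
Inductive NextR (a : nat -> nat) (k : nat) :
    listing -> seq nat -> listing -> Prop :=
| Next_leaf phi beta m :
    k - size beta = 2 ->
    least_empty a k phi beta m ->
    NextR a k phi beta (set1 phi (rcons beta m))
| Next_small phi beta m phi' :
    2 < k - size beta ->
    least_empty a k phi beta m ->
    m < a 2 ->
    NextR a k phi (rcons beta m) phi' ->
    NextR a k phi beta phi'
| Next_large phi beta m0 m phi' :
    2 < k - size beta ->
    least_empty a k phi beta m0 ->
    a 2 <= m0 ->
    least_nonfull a k phi beta m ->
    NextR a k phi (rcons beta m) phi' ->
    NextR a k phi beta phi'.

Inductive IterNext (a : nat -> nat) (k : nat) : nat -> listing -> listing -> Prop :=
| Iter0 phi : IterNext a k 0 phi phi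
| IterS n phi phi1 phi2 :
    NextR a k phi [::] phi1 -> IterNext a k n phi1 phi2 -> IterNext a k n.+1 phi phi2.

Definition zero_listing : listing := fun _ => false.

Definition partial_listing (a : nat -> nat) (k : nat) (phi : listing) : Prop :=
  exists n, IterNext a k n zero_listing phi.

(* alpha' is a prefix alpha_k ... alpha_(l+1) with l >= 2 (including the empty
   prefix), so that alpha' i is again a prefix or an element *)
Definition is_short_prefix (a : nat -> nat) (k : nat) (b : seq nat) : bool :=
  (size b <= k - 2) && in_range a k b.

Definition Kc_connected (a : nat -> nat) (k : nat) (c : nat) (phi : listing) : Prop :=
  forall alpha', is_short_prefix a k alpha' ->
    1 < a (k - size alpha') ->
    nonempty a k phi (rcons alpha' 1) ->
    nonempty a k phi (rcons alpha' c.-1).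

(* Main.v *)
Require Import Defs.
From mathcomp Require Import all_boot.
From mathcomp Require Import zify.
From Stdlib Require Import Classical.
Set Implicit Arguments. Unset Strict Implicit. Unset Printing Implicit Defensive.

Implicit Types (b y s t u c d x : seq nat) (phi : listing).

Definition zext (k : nat) (b : seq nat) := b ++ nseq (k.-1 - size b) 0.

Lemma inrP a k b : reflect (forall j, j < size b -> nth 0 b j < a (k - j)) (in_range a k b).
Proof.
rewrite /in_range; apply: (iffP allP) => H j.
  by move=> Hj; apply: H; rewrite mem_iota add0n.
by rewrite mem_iota add0n => /andP[_ Hj]; exact: H.
Qed.

Lemma inr_cat a k b s : in_range a k (b ++ s) <->
  in_range a k b /\ (forall j, j < size s -> nth 0 s j < a (k - (size b + j))).
Proof.
split.
  move/inrP => H; split.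
    apply/inrP => j Hj; have := H j; rewrite size_cat nth_cat Hj; apply; lia.
  move=> j Hj; have := H (size b + j); rewrite size_cat nth_cat.
  have -> : (size b + j < size b) = false by lia.
  rewrite addKn; apply; lia.
move=> [/inrP H1 H2]; apply/inrP => j; rewrite size_cat nth_cat => Hj.
case: (ltnP j (size b)) => Hjb; first exact: H1.
have := H2 (j - size b); rewrite subnKC //; apply; lia.
Qed.

Lemma inr_rcons a k b i : in_range a k (rcons b i) <-> in_range a k b /\ i < a (k - size b).
Proof.
rewrite -cats1 inr_cat; split.
  by move=> [H1 H2]; split=> //; have := H2 0 erefl; rewrite addn0.
by move=> [H1 H2]; split=> // -[|j] //=; rewrite addn0.
Qed.

Lemma inr_prefix a k s t : in_range a k t -> prefix s t -> in_range a k s.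
Proof. by move=> H /prefixP[u Hu]; move: H; rewrite Hu inr_cat => -[]. Qed.

Lemma zext_elem k a b : (forall i, 2 <= i <= k -> 0 < a i) ->
  in_range a k b -> size b <= k.-1 -> is_elem a k (zext k b).
Proof.
move=> Hpos Hb Hs; rewrite /is_elem /zext size_cat size_nseq subnKC // eqxx /=.
apply/inr_cat; split=> // j; rewrite size_nseq nth_nseq => Hj; rewrite Hj.
apply: Hpos; lia.
Qed.

Lemma prefix_child a k b y : is_elem a k y -> prefix b y -> size b < k.-1 ->
  exists i, prefix (rcons b i) y.
Proof.
move=> /andP[/eqP Hy _] /prefixP[s Hs] Hb; subst y.
case: s Hy => [|i s] Hy.
  by exfalso; move: Hy; rewrite cats0 => Hy; rewrite Hy ltnn in Hb.
by exists i; rewrite -cat_rcons prefix_prefix.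
Qed.

Lemma prefix_uniq (b y : seq nat) i j : prefix (rcons b i) y -> prefix (rcons b j) y -> i = j.
Proof.
rewrite !prefixE !size_rcons => /eqP H1 /eqP H2.
by have := rcons_inj (etrans (esym H1) H2) => -[].
Qed.

Lemma prefix_cmp (s t y : seq nat) : prefix s y -> prefix t y -> size s <= size t -> prefix s t.
Proof.
rewrite !prefixE => /eqP H1 /eqP H2 Hst.
by rewrite -H2 take_takel // H1.
Qed.

Lemma prefix_total (s t y : seq nat) : prefix s y -> prefix t y -> prefix s t \/ prefix t s.
Proof.
move=> H1 H2; case: (leqP (size s) (size t)) => H.
  by left; exact: prefix_cmp H1 H2 H.
by right; apply: prefix_cmp H2 H1 _; lia.
Qed.

Lemma elem_eq a k y c : is_elem a k y -> prefix c y -> size c = k.-1 -> y = c.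
Proof.
move=> /andP[/eqP Hy _] Hp Hc; move: Hp.
by rewrite prefixE Hc -Hy take_size => /eqP.
Qed.

Lemma prefix_nseq0 (u : seq nat) i n : prefix (rcons u i) (nseq n 0) -> i = 0.
Proof.
elim: u n => [|x u IH] [|n] //=.
  by case/andP=> /eqP.
by case/andP=> _; apply: IH.
Qed.

Lemma elem_inr a k y : is_elem a k y -> in_range a k y.
Proof. by case/andP. Qed.

Lemma elem_size a k y : is_elem a k y -> size y = k.-1.
Proof. by case/andP=> /eqP. Qed.

Lemma zext_rcons0 k b : size b < k.-1 -> zext k (rcons b 0) = zext k b.
Proof.
move=> H; rewrite /zext size_rcons -cats1 -catA cat1s.
have -> : k.-1 - size b = (k.-1 - (size b).+1).+1 by lia.
by [].
Qed.

Lemma zext_size k b : size b <= k.-1 -> size (zext k b) = k.-1.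
Proof. by move=> H; rewrite /zext size_cat size_nseq; lia. Qed.

Lemma zext_full k b : size b = k.-1 -> zext k b = b.
Proof. by move=> H; rewrite /zext H subnn cats0. Qed.

Definition single a k (phi : listing) (b : seq nat) : Prop :=
  forall y, is_elem a k y -> prefix b y -> phi y = (y == zext k b).

Definition agree a k (phi phi' : listing) (b : seq nat) : Prop :=
  forall y, is_elem a k y -> prefix b y -> phi y = phi' y.

Lemma agree_prefix a k phi phi' b d : agree a k phi phi' b -> prefix b d -> agree a k phi phi' d.
Proof. by move=> H Hbd y Hy Hdy; apply: H => //; exact: prefix_trans Hdy. Qed.

Lemma agree_nonempty a k phi phi' b : agree a k phi phi' b ->
  nonempty a k phi b <-> nonempty a k phi' b.
Proof.
move=> H; split=> -[y [Hy Hp Hf]]; exists y; split=> //.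
  by rewrite -H. by rewrite H.
Qed.

Lemma agree_full a k phi phi' b : agree a k phi phi' b ->
  full a k phi b <-> full a k phi' b.
Proof.
move=> H; split=> Hf y Hy Hp.
  by rewrite -H //; apply: Hf. by rewrite H //; apply: Hf.
Qed.

Lemma agree_single a k phi phi' b : agree a k phi phi' b ->
  single a k phi b <-> single a k phi' b.
Proof.
move=> H; split=> Hf y Hy Hp.
  by rewrite -H //; apply: Hf. by rewrite H //; apply: Hf.
Qed.

Lemma agree_set1 a k phi x b : ~~ prefix b x -> agree a k phi (Defs.set1 phi x) b.
Proof.
move=> Hx y Hy Hp; rewrite /Defs.set1.
by have -> : (y == x) = false by apply/negbTE; apply: contraNneq Hx => <-.
Qed.

Lemma agree_sym a k phi phi' b : agree a k phi phi' b -> agree a k phi' phi b.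
Proof. by move=> H y Hy Hp; rewrite H. Qed.

Lemma nonempty_set1 a k phi x b : nonempty a k phi b -> nonempty a k (Defs.set1 phi x) b.
Proof. by move=> [y [Hy Hp Hf]]; exists y; split=> //; rewrite /Defs.set1 Hf orbT. Qed.

Lemma nonempty_set1x a k phi x b : is_elem a k x -> prefix b x -> nonempty a k (Defs.set1 phi x) b.
Proof. by move=> Hx Hp; exists x; split=> //; rewrite /Defs.set1 eqxx. Qed.

Lemma nonempty_prefix a k phi s t : prefix s t -> nonempty a k phi t -> nonempty a k phi s.
Proof. by move=> Hst [y [Hy Hp Hf]]; exists y; split=> //; exact: prefix_trans Hp. Qed.

Lemma full_prefix a k phi s t : prefix s t -> full a k phi s -> full a k phi t.
Proof. by move=> Hst Hf y Hy Hp; apply: Hf => //; exact: prefix_trans Hp. Qed.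

Lemma empty_child a k phi b i : empty a k phi b -> empty a k phi (rcons b i).
Proof. by move=> He Hne; apply: He; apply: nonempty_prefix Hne; exact: prefix_rcons. Qed.

Lemma full_child a k phi b i : full a k phi b -> full a k phi (rcons b i).
Proof. by apply: full_prefix; exact: prefix_rcons. Qed.

Lemma nonempty_child a k phi b : size b < k.-1 -> nonempty a k phi b ->
  exists i, nonempty a k phi (rcons b i).
Proof.
move=> Hs [y [Hy Hp Hf]]; have [i Hi] := prefix_child Hy Hp Hs.
by exists i, y.
Qed.

Lemma full_children a k phi b : size b < k.-1 -> (forall i, full a k phi (rcons b i)) ->
  full a k phi b.
Proof.
move=> Hs H y Hy Hp; have [i Hi] := prefix_child Hy Hp Hs; exact: (H i y Hy Hi).
Qed.

Lemma oor_empty a k phi b : ~~ in_range a k b -> empty a k phi b.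
Proof.
move=> Hb [y [Hy Hp _]]; move/negP: Hb; apply; apply: inr_prefix Hp; exact: elem_inr.
Qed.

Lemma oor_full a k phi b : ~~ in_range a k b -> full a k phi b.
Proof.
move=> Hb y Hy Hp; exfalso; move/negP: Hb; apply; apply: inr_prefix Hp; exact: elem_inr.
Qed.

Lemma child_oor a k b i : a (k - size b) <= i -> ~~ in_range a k (rcons b i).
Proof. by move=> H; apply/negP; rewrite inr_rcons => -[_]; lia. Qed.

Lemma nonempty_inr a k phi b : nonempty a k phi b -> in_range a k b.
Proof. by move=> [y [Hy Hp _]]; apply: inr_prefix Hp; exact: elem_inr. Qed.

Lemma nonfull_inr a k phi b : ~ full a k phi b -> in_range a k b.
Proof. by move=> H; apply/negPn/negP => /(oor_full phi). Qed.

Lemma full_nonempty a k phi b : (forall i, 2 <= i <= k -> 0 < a i) ->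
  in_range a k b -> size b <= k.-1 -> full a k phi b -> nonempty a k phi b.
Proof.
move=> Hpos Hb Hs Hf; exists (zext k b); split.
- exact: zext_elem.
- exact: prefix_prefix.
- by apply: Hf; [exact: zext_elem | exact: prefix_prefix].
Qed.

Lemma single_nonempty a k phi b : (forall i, 2 <= i <= k -> 0 < a i) ->
  in_range a k b -> size b <= k.-1 -> single a k phi b -> nonempty a k phi b.
Proof.
move=> Hpos Hb Hs Hf; exists (zext k b); split.
- exact: zext_elem.
- exact: prefix_prefix.
- by rewrite Hf ?eqxx //; [exact: zext_elem | exact: prefix_prefix].
Qed.

Lemma single_child0 a k phi b : size b < k.-1 -> single a k phi b -> single a k phi (rcons b 0).
Proof.
move=> Hs H y Hy Hp; rewrite zext_rcons0 //; apply: H => //.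
apply: prefix_trans Hp; exact: prefix_rcons.
Qed.

Lemma prefix_rcons_zext k b i : prefix (rcons b i) (zext k b) -> i = 0.
Proof.
rewrite /zext -cats1 prefix_catr // eqxx /= => H.
exact: (@prefix_nseq0 [::] i (k.-1 - size b)).
Qed.

Lemma single_childS a k phi b i : 0 < i -> single a k phi b -> empty a k phi (rcons b i).
Proof.
move=> Hi H [y [Hy Hp Hf]]; rewrite H // in Hf.
  by move/eqP: Hf => Hf; subst y; have := prefix_rcons_zext Hp; lia.
apply: prefix_trans Hp; exact: prefix_rcons.
Qed.

Lemma elem_level a k phi c : size c = k.-1 -> full a k phi c -> single a k phi c.
Proof.
move=> Hc Hf y Hy Hp; have E := elem_eq Hy Hp Hc; subst y.
rewrite zext_full // eqxx; exact: Hf Hy Hp.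
Qed.

Lemma elem_level2 a k phi c : size c = k.-1 -> nonempty a k phi c -> full a k phi c.
Proof.
move=> Hc [y [Hy Hp Hf]] z Hz Hpz.
have E1 := elem_eq Hz Hpz Hc; have E2 := elem_eq Hy Hp Hc; by subst.
Qed.

Lemma empty_set1_single a k phi b : empty a k phi b -> single a k (Defs.set1 phi (zext k b)) b.
Proof.
move=> He y Hy Hp; rewrite /Defs.set1.
case: eqP => //= _; apply/negbTE/negP => Hf; apply: He; by exists y.
Qed.

Fixpoint goodn a k (n : nat) (phi : listing) (b : seq nat) : Prop :=
  match n with
  | 0 => True
  | n'.+1 =>
    (exists p, p <= a 2 /\ (forall i, i < p -> single a k phi (rcons b i)) /\
       (forall i, p <= i -> empty a k phi (rcons b i)))
    \/
    (exists q, (forall i, i < q -> full a k phi (rcons b i)) /\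
       goodn a k n' phi (rcons b q) /\
       (forall i, q < i -> i < a 2 -> single a k phi (rcons b i)) /\
       (forall i, q < i -> a 2 <= i -> empty a k phi (rcons b i)) /\
       (q < a 2 -> nonempty a k phi (rcons b q)))
  end.

Definition good a k phi b := goodn a k (k.-1 - size b) phi b.

Lemma goodn_agree a k n phi phi' b : agree a k phi phi' b -> goodn a k n phi b -> goodn a k n phi' b.
Proof.
elim: n b => [//|n IH] b Hag /=.
have Hc : forall i, agree a k phi phi' (rcons b i).
  by move=> i; apply: agree_prefix Hag _; exact: prefix_rcons.
case=> [[p [Hp [H1 H2]]]|[q [H1 [H2 [H3 [H4 H5]]]]]].
  left; exists p; split=> //; split=> i Hi.
    by rewrite -(agree_single (Hc i)); apply: H1.
  by move=> Hne; apply: (H2 i Hi); rewrite (agree_nonempty (Hc i)).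
right; exists q; split; first by move=> i Hi; rewrite -(agree_full (Hc i)); apply: H1.
split; first exact: IH (Hc q) H2.
split; first by move=> i Hi Hi2; rewrite -(agree_single (Hc i)); apply: H3.
split; first by move=> i Hi Hi2 Hne; apply: (H4 i Hi Hi2); rewrite (agree_nonempty (Hc i)).
by move=> Hq; rewrite -(agree_nonempty (Hc q)); apply: H5.
Qed.

Definition Hpos_t (a : nat -> nat) (k : nat) := forall i, 2 <= i <= k -> 0 < a i.
Definition Hmono_t (a : nat -> nat) (k : nat) := forall i, 2 < i <= k -> a 2 <= a i.

Lemma a2le a k (b : seq nat) : Hmono_t a k -> 2 <= k -> size b <= k - 2 -> a 2 <= a (k - size b).
Proof.
move=> Hm Hk Hs; case: (ltnP 2 (k - size b)) => H.
  apply: Hm; lia.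
by have -> : k - size b = 2 by lia.
Qed.

Lemma a2pos a k : Hpos_t a k -> 2 <= k -> 0 < a 2.
Proof. by move=> Hp Hk; apply: Hp; rewrite leqnn. Qed.

Lemma good_empty a k n phi b : empty a k phi b -> goodn a k n phi b.
Proof.
case: n => [//|n] He /=; left; exists 0; split=> //; split=> // i _.
exact: empty_child.
Qed.

Lemma good_single a k n phi b : Hpos_t a k -> 2 <= k -> n <= k.-1 - size b ->
  single a k phi b -> goodn a k n phi b.
Proof.
move=> Hp Hk; case: n => [//|n] Hn Hs /=; left; exists 1; split; first exact: (a2pos Hp Hk).
split=> i Hi.
  have -> : i = 0 by lia.
  apply: single_child0 => //; lia.
apply: single_childS Hs; lia.
Qed.

Lemma good_full a k n phi b : Hmono_t a k -> 2 <= k -> n <= k.-1 - size b ->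
  full a k phi b -> goodn a k n phi b.
Proof.
move=> Hm Hk; elim: n b => [//|n IH] b Hn Hf /=.
have Ha := @a2le a k b Hm Hk ltac:(lia).
right; exists (a (k - size b)); split; first by move=> i _; exact: full_child.
split; first by apply: IH; [rewrite size_rcons; lia | exact: full_child].
split; first by move=> i Hi1 Hi2; exfalso; lia.
split; first by move=> i Hi _; apply: oor_empty; apply: child_oor; lia.
by move=> Hq; exfalso; lia.
Qed.

Lemma good_children a k n phi b i : Hpos_t a k -> Hmono_t a k -> 2 <= k ->
  n.+1 <= k.-1 - size b -> goodn a k n.+1 phi b -> goodn a k n phi (rcons b i).
Proof.
move=> Hp Hm Hk Hn /= [[p [Hp2 [H1 H2]]]|[q [H1 [H2 [H3 [H4 H5]]]]]].
  case: (ltnP i p) => Hi.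
    by apply: good_single => //; [rewrite size_rcons; lia | exact: H1].
  by apply: good_empty; exact: H2.
case: (ltngtP i q) => Hi.
- by apply: good_full => //; [rewrite size_rcons; lia | exact: H1].
- case: (ltnP i (a 2)) => Hi2.
    by apply: good_single => //; [rewrite size_rcons; lia | exact: H3].
  by apply: good_empty; exact: H4.
- by rewrite Hi.
Qed.

Lemma good_all a k phi : Hpos_t a k -> Hmono_t a k -> 2 <= k ->
  good a k phi [::] -> forall b, size b <= k.-1 -> good a k phi b.
Proof.
move=> Hp Hm Hk H0; elim/last_ind => [//|b i IH]; rewrite size_rcons => Hs.
rewrite /good size_rcons.
have E : k.-1 - size b = (k.-1 - (size b).+1).+1 by lia.
apply: good_children => //; first by lia.
by rewrite -E; apply: IH; lia.
Qed.

Lemma ph2_nonempty a k phi b q : Hpos_t a k -> Hmono_t a k -> 2 <= k ->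
  in_range a k b -> size b <= k - 2 ->
  (forall i, i < q -> full a k phi (rcons b i)) ->
  (forall i, q < i -> i < a 2 -> single a k phi (rcons b i)) ->
  (q < a 2 -> nonempty a k phi (rcons b q)) ->
  forall i, i < a 2 -> nonempty a k phi (rcons b i).
Proof.
move=> Hp Hm Hk Hb Hs H1 H3 H5 i Hi.
have Ha := @a2le a k b Hm Hk Hs.
have Hr : in_range a k (rcons b i) by apply/inr_rcons; split=> //; lia.
have Hsz : size (rcons b i) <= k.-1 by rewrite size_rcons; lia.
case: (ltngtP i q) => Hiq.
- by apply: full_nonempty => //; exact: H1.
- by apply: single_nonempty => //; exact: H3.
- by subst i; exact: H5.
Qed.

Definition concl a k phi b phi' : Prop :=
  (~ full a k phi b -> exists x, [/\ is_elem a k x, prefix b x, ~~ phi x & phi' = Defs.set1 phi x]) /\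
  (empty a k phi b -> phi' = Defs.set1 phi (zext k b)) /\ good a k phi' b.

Lemma nonfull_wit a k phi b : ~ full a k phi b ->
  exists y, [/\ is_elem a k y, prefix b y & ~~ phi y].
Proof.
move=> Hnf; apply: NNPP => H; apply: Hnf => y Hy Hp.
by apply/negPn/negP => Hn; apply: H; exists y.
Qed.

Lemma least_empty_eq a k phi b m p : least_empty a k phi b m -> empty a k phi (rcons b p) ->
  (forall i, i < p -> nonempty a k phi (rcons b i)) -> m = p.
Proof.
move=> [He Hlt] Hp Hlt'; case: (ltngtP m p) => H //.
- by exfalso; exact: He (Hlt' m H).
- by exfalso; exact: Hp (Hlt p H).
Qed.

Lemma agree_sib a k phi (b : seq nat) i m x : prefix (rcons b m) x -> i != m ->
  agree a k phi (Defs.set1 phi x) (rcons b i).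
Proof.
move=> Hm Hi; apply: agree_set1; apply/negP => Hx.
by move/eqP: Hi; apply; exact: prefix_uniq Hx Hm.
Qed.

Lemma agree_full_set1 a k phi b x : full a k phi b -> agree a k phi (Defs.set1 phi x) b.
Proof. by move=> Hf y Hy Hp; rewrite /Defs.set1 (Hf y Hy Hp) orbT. Qed.

Lemma pres_leaf a k phi b m : Hpos_t a k -> Hmono_t a k -> 2 <= k ->
  k - size b = 2 -> least_empty a k phi b m -> in_range a k b -> good a k phi b ->
  concl a k phi b (Defs.set1 phi (rcons b m)).
Proof.
move=> Hp Hm Hk Hsb Hle Hb Hg.
have Hs1 : size (rcons b m) = k.-1 by rewrite size_rcons; lia.
have Ha := @a2le a k b Hm Hk ltac:(lia).
have Hcs : forall i, size (rcons b i) = k.-1 by move=> i; rewrite size_rcons; lia.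
have P1 : ~ full a k phi b -> [/\ is_elem a k (rcons b m), prefix b (rcons b m) & ~~ phi (rcons b m)].
  move=> Hnf; have [y [Hy Hpy Hny]] := nonfull_wit Hnf.
  have [j Hj] := prefix_child Hy Hpy ltac:(lia).
  have Ey := elem_eq Hy Hj (Hcs j); subst y.
  have Hje : empty a k phi (rcons b j).
    by move=> [z [Hz Hpz Hfz]]; rewrite -(elem_eq Hz Hpz (Hcs j)) Hfz in Hny.
  have Hmj : m <= j.
    by case: (leqP m j) => // H; exfalso; apply: Hje; exact: Hle.2.
  have Hja : j < a (k - size b) by move: (elem_inr Hy) => /inr_rcons [].
  have Hx : is_elem a k (rcons b m).
    by rewrite /is_elem Hs1 eqxx /=; apply/inr_rcons; split=> //; lia.
  split=> //; first exact: prefix_rcons.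
  by apply/negP => Hf; apply: Hle.1; exists (rcons b m); split=> //; exact: prefix_refl.
split; first by move=> Hnf; have [H1 H2 H3] := P1 Hnf; exists (rcons b m).
split.
  move=> He; have Em : m = 0.
    by apply: least_empty_eq Hle _ _ => //; exact: empty_child.
  subst m; rewrite -(zext_rcons0 (k:=k)) ?zext_full //; lia.
case: (classic (full a k phi b)) => Hfb.
  by apply: goodn_agree Hg; exact: agree_full_set1.
have [Hx Hpx Hnx] := P1 Hfb.
have Hxm : prefix (rcons b m) (rcons b m) := prefix_refl _.
have Hxfull : full a k (Defs.set1 phi (rcons b m)) (rcons b m).
  by apply: elem_level2 => //; apply: nonempty_set1x => //.
have Hmr : m < a (k - size b) by move: (elem_inr Hx) => /inr_rcons [].
rewrite /good.
have -> : k.-1 - size b = 1 by lia.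
move: Hg; rewrite /good; have -> : k.-1 - size b = 1 by lia.
move=> /= [[p [Hp2 [H1 H2]]]|[q [H1 [_ [H3 [H4 H5]]]]]].
  have Hne : forall i, i < p -> nonempty a k phi (rcons b i).
    move=> i Hi; apply: single_nonempty => //; last by apply: H1.
      by apply/inr_rcons; split=> //; lia.
    by rewrite Hcs.
  have Emp := least_empty_eq Hle (H2 p (leqnn p)) Hne; subst p.
  case: (ltnP m (a 2)) => Hma.
    left; exists m.+1; split=> //; split=> i Hi.
      case: (eqVneq i m) => Him.
        by subst i; apply: elem_level.
      by rewrite -(agree_single (agree_sib phi Hxm Him)); apply: H1; lia.
    have Him : i != m by apply/negP => /eqP; lia.
    by move=> Hne'; apply: (H2 i); [lia | rewrite (agree_nonempty (agree_sib phi Hxm Him))].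
  right; exists m; split.
    move=> i Hi; have Him : i != m by apply/negP => /eqP; lia.
    rewrite -(agree_full (agree_sib phi Hxm Him)); apply: elem_level2 => //; exact: Hne.
  split=> //; split; first by move=> i Hi1 Hi2; exfalso; lia.
  split; last by move=> H; exfalso; lia.
  move=> i Hi _; have Him : i != m by apply/negP => /eqP; lia.
  by move=> Hne'; apply: (H2 i); [lia | rewrite (agree_nonempty (agree_sib phi Hxm Him))].
have Hall := ph2_nonempty Hp Hm Hk Hb ltac:(lia) H1 H3 H5.
have Hma : a 2 <= m.
  by case: (leqP (a 2) m) => // H; exfalso; apply: Hle.1; exact: Hall.
have Hmq : q <= m.
  case: (leqP q m) => // H; exfalso; apply: Hle.1; apply: full_nonempty => //.
  - by apply/inr_rcons.
  - by rewrite Hcs.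
  - exact: H1.
right; exists m; split.
  move=> i Hi; have Him : i != m by apply/negP => /eqP; lia.
  rewrite -(agree_full (agree_sib phi Hxm Him)); apply: elem_level2 => //; exact: Hle.2.
split=> //; split; first by move=> i Hi1 Hi2; exfalso; lia.
split; last by move=> H; exfalso; lia.
move=> i Hi Hi2; have Him : i != m by apply/negP => /eqP; lia.
by move=> Hne'; apply: (H4 i); [lia | lia | rewrite (agree_nonempty (agree_sib phi Hxm Him))].
Qed.

Lemma pres_small a k phi b m phi' : Hpos_t a k -> Hmono_t a k -> 2 <= k ->
  2 < k - size b -> least_empty a k phi b m -> m < a 2 ->
  (in_range a k (rcons b m) -> good a k phi (rcons b m) -> concl a k phi (rcons b m) phi') ->
  in_range a k b -> good a k phi b -> concl a k phi b phi'.
Proof.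
move=> Hp Hm Hk Hsb Hle Hma IH Hb Hg.
have Ha := @a2le a k b Hm Hk ltac:(lia).
have Hcr : in_range a k (rcons b m) by apply/inr_rcons; split=> //; lia.
have Hcs : size (rcons b m) <= k.-1 by rewrite size_rcons; lia.
have Hce := Hle.1.
have [IH1 [IH2 IH3]] := IH Hcr (good_empty _ Hce).
have Hcnf : ~ full a k phi (rcons b m).
  by move=> Hf; apply: Hce; apply: full_nonempty.
have [x [Hx Hpx Hnx Ephi]] := IH1 Hcnf.
have Ephi2 := IH2 Hce.
split.
  move=> _; exists x; split=> //; apply: prefix_trans Hpx; exact: prefix_rcons.
split.
  move=> He; have Em : m = 0.
    by apply: least_empty_eq Hle _ _ => //; exact: empty_child.
  by subst m; rewrite Ephi2 zext_rcons0 //; lia.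
move: Hg; rewrite /good; set n := k.-1 - size b.
have En : n = (k.-1 - size (rcons b m)).+1 by rewrite /n size_rcons; lia.
rewrite En => /= [[[p [Hp2 [H1 H2]]]|[q [H1 [_ [H3 [H4 H5]]]]]]].
  have Hne : forall i, i < p -> nonempty a k phi (rcons b i).
    move=> i Hi; apply: single_nonempty => //; last by apply: H1.
      by apply/inr_rcons; split=> //; lia.
    by rewrite size_rcons; lia.
  have Emp := least_empty_eq Hle (H2 p (leqnn p)) Hne; subst p.
  left; exists m.+1; split=> //; split=> i Hi.
    case: (eqVneq i m) => Him.
      by subst i; rewrite Ephi2; apply: empty_set1_single.
    by rewrite Ephi -(agree_single (agree_sib phi Hpx Him)); apply: H1; lia.
  have Him : i != m by apply/negP => /eqP; lia.
  by move=> Hne'; apply: (H2 i); [lia | rewrite (agree_nonempty (agree_sib phi Hpx Him)) -Ephi].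
have Hall := ph2_nonempty Hp Hm Hk Hb ltac:(lia) H1 H3 H5.
by exfalso; apply: Hce; apply: Hall.
Qed.

Lemma pres_large a k phi b m0 m phi' : Hpos_t a k -> Hmono_t a k -> 2 <= k ->
  2 < k - size b -> least_empty a k phi b m0 -> a 2 <= m0 -> least_nonfull a k phi b m ->
  (in_range a k (rcons b m) -> good a k phi (rcons b m) -> concl a k phi (rcons b m) phi') ->
  in_range a k b -> good a k phi b -> concl a k phi b phi'.
Proof.
move=> Hp Hm Hk Hsb Hle Hma Hln IH Hb Hg.
have Ha := @a2le a k b Hm Hk ltac:(lia).
have Hcnf := Hln.1.
have Hcr : in_range a k (rcons b m) := nonfull_inr Hcnf.
have Hgc : good a k phi (rcons b m).
  rewrite /good size_rcons; apply: good_children => //; first lia.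
  by have -> : (k.-1 - (size b).+1).+1 = k.-1 - size b by lia.
have [IH1 [IH2 IH3]] := IH Hcr Hgc.
have [x [Hx Hpx Hnx Ephi]] := IH1 Hcnf.
split.
  move=> _; exists x; split=> //; apply: prefix_trans Hpx; exact: prefix_rcons.
split.
  move=> He; have Em : m0 = 0.
    by apply: least_empty_eq Hle _ _ => //; exact: empty_child.
  by have := a2pos Hp Hk; lia.
have Hnec : nonempty a k phi' (rcons b m) by rewrite Ephi; apply: nonempty_set1x.
have Hag : forall i, i != m -> agree a k phi phi' (rcons b i).
  by move=> i Hi; rewrite Ephi; apply: agree_sib Hpx Hi.
have Hfl : forall i, i < m -> full a k phi' (rcons b i).
  move=> i Hi; have Him : i != m by apply/negP => /eqP; lia.
  by rewrite -(agree_full (Hag i Him)); apply: Hln.2.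
move: Hg IH3; rewrite /good; set n := k.-1 - size b.
have En : n = (k.-1 - size (rcons b m)).+1 by rewrite /n size_rcons; lia.
rewrite En => /= [[[p [Hp2 [H1 H2]]]|[q [H1 [_ [H3 [H4 H5]]]]]]] IH3.
  have Hne : forall i, i < p -> nonempty a k phi (rcons b i).
    move=> i Hi; apply: single_nonempty => //; last by apply: H1.
      by apply/inr_rcons; split=> //; lia.
    by rewrite size_rcons; lia.
  have Emp := least_empty_eq Hle (H2 p (leqnn p)) Hne; subst p.
  right; exists m; split=> //; split=> //.
  split.
    move=> i Hi Hi2; have Him : i != m by apply/negP => /eqP; lia.
    by rewrite -(agree_single (Hag i Him)); apply: H1; lia.
  split=> // i Hi Hi2; have Him : i != m by apply/negP => /eqP; lia.
  by move=> Hne'; apply: (H2 i); [lia | rewrite (agree_nonempty (Hag i Him))].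
have Hmq : q <= m.
  by case: (leqP q m) => // H; exfalso; apply: Hcnf; apply: H1.
right; exists m; split=> //; split=> //.
split.
  move=> i Hi Hi2; have Him : i != m by apply/negP => /eqP; lia.
  by rewrite -(agree_single (Hag i Him)); apply: H3 => //; lia.
split=> // i Hi Hi2; have Him : i != m by apply/negP => /eqP; lia.
by move=> Hne'; apply: (H4 i); [lia | lia | rewrite (agree_nonempty (Hag i Him))].
Qed.

Lemma pres a k phi b phi' : Hpos_t a k -> Hmono_t a k -> 2 <= k ->
  NextR a k phi b phi' -> in_range a k b -> good a k phi b -> concl a k phi b phi'.
Proof.
move=> Hp Hm Hk; elim=> {phi b phi'}.
- by move=> phi b m Hs Hle; apply: pres_leaf.
- move=> phi b m phi' Hs Hle Hma _ IH; exact: pres_small Hs Hle Hma IH.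
- move=> phi b m0 m phi' Hs Hle Hma Hln _ IH; exact: pres_large Hs Hle Hma Hln IH.
Qed.

Lemma iter_good a k n phi psi : Hpos_t a k -> Hmono_t a k -> 2 <= k ->
  IterNext a k n phi psi -> good a k phi [::] -> good a k psi [::].
Proof.
move=> Hp Hm Hk; elim=> {n phi psi} // n phi phi1 phi2 HN _ IH Hg.
apply: IH; have [_ [_ H]] := pres Hp Hm Hk HN erefl Hg; exact: H.
Qed.

Definition bad a k (c : nat) phi al : Prop :=
  [/\ is_short_prefix a k al, 1 < a (k - size al), nonempty a k phi (rcons al 1)
    & ~ nonempty a k phi (rcons al c.-1)].

Lemma bad_nnn a k (c : nat) phi al d : Hpos_t a k -> Hmono_t a k -> 2 <= k -> 0 < c <= a 2 ->
  bad a k c phi al -> prefix d al ->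
  [/\ nonempty a k phi d, ~ full a k phi d & ~ single a k phi d].
Proof.
move=> Hp Hm Hk Hc [/andP[Hs Hr] H1 Hn1 Hnc] Hd.
have Ha := @a2le a k al Hm Hk Hs.
split.
- apply: nonempty_prefix Hn1; apply: prefix_trans Hd _; exact: prefix_rcons.
- move=> Hf; apply: Hnc; apply: full_nonempty => //.
  + by apply/inr_rcons; split=> //; lia.
  + by rewrite size_rcons; lia.
  + apply: full_prefix Hf; apply: prefix_trans Hd _; exact: prefix_rcons.
- move=> Hsg; case: Hn1 => y [Hy Hpy Hfy].
  have Hdy : prefix d y by apply: prefix_trans Hpy; apply: prefix_trans Hd _; exact: prefix_rcons.
  rewrite (Hsg y Hy Hdy) in Hfy; move/eqP: Hfy => Ey; subst y.
  move/prefixP: Hd => [u Eu]; subst al.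
  move: Hpy; rewrite /zext rcons_cat prefix_catr // eqxx /=.
  by move/prefix_nseq0.
Qed.

Lemma nnn_route a k n phi b i : goodn a k n.+1 phi b ->
  nonempty a k phi (rcons b i) -> ~ full a k phi (rcons b i) -> ~ single a k phi (rcons b i) ->
  [/\ (forall j, j < i -> full a k phi (rcons b j)), goodn a k n phi (rcons b i),
    (forall j, i < j -> j < a 2 -> single a k phi (rcons b j)),
    (forall j, i < j -> a 2 <= j -> empty a k phi (rcons b j))
    & (i < a 2 -> nonempty a k phi (rcons b i))].
Proof.
move=> /= [[p [Hp2 [H1 H2]]]|[q [H1 [H2 [H3 [H4 H5]]]]]] Hne Hnf Hns.
  case: (ltnP i p) => Hi; first by exfalso; apply: Hns; exact: H1.
  by exfalso; exact: H2 i Hi Hne.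
case: (ltngtP i q) => Hi.
- by exfalso; apply: Hnf; exact: H1.
- case: (ltnP i (a 2)) => Hi2; first by exfalso; apply: Hns; exact: H3.
  by exfalso; exact: H4 i Hi Hi2 Hne.
- by subst i; split.
Qed.

Lemma bad_shape a k (c : nat) phi al : Hpos_t a k -> Hmono_t a k -> 2 <= k -> 0 < c <= a 2 ->
  good a k phi al -> bad a k c phi al ->
  exists p, [/\ 2 <= p, p <= c.-1, (forall i, i < p -> single a k phi (rcons al i))
    & (forall i, p <= i -> empty a k phi (rcons al i))].
Proof.
move=> Hp Hm Hk Hc Hg [/andP[Hs Hr] H1 Hn1 Hnc].
have Ha := @a2le a k al Hm Hk Hs.
move: Hg; rewrite /good.
have -> : k.-1 - size al = (k.-1 - size al).-1.+1 by lia.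
move=> /= [[p [Hp2 [H3 H4]]]|[q [H3 [_ [H5 [H6 H7]]]]]].
  exists p; split=> //.
  - by case: (leqP 2 p) => // H; exfalso; apply: (H4 1) => //; lia.
  - case: (leqP p c.-1) => // H; exfalso; apply: Hnc; apply: single_nonempty => //.
    + by apply/inr_rcons; split=> //; lia.
    + by rewrite size_rcons; lia.
    + exact: H3.
exfalso; apply: Hnc; apply: (ph2_nonempty Hp Hm Hk Hr Hs H3 H5 H7); lia.
Qed.

Lemma seq_cases (s t : seq nat) : prefix s t \/ prefix t s \/
  exists u (x y : nat) s' t', [/\ x <> y, s = u ++ x :: s' & t = u ++ y :: t'].
Proof.
elim: s t => [|x s IH] [|y t]; try by [left | right; left].
case: (eqVneq x y) => Hxy.
  subst y; case: (IH t) => [H|[H|[u [x' [y' [s' [t' [H1 H2 H3]]]]]]]].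
  - by left; rewrite prefix_cons eqxx.
  - by right; left; rewrite prefix_cons eqxx.
  - by right; right; exists (x :: u), x', y', s', t'; rewrite H2 H3.
by right; right; exists [::], x, y, s, t; split=> //; apply/eqP.
Qed.

Lemma bad_unique a k (c : nat) phi al be : Hpos_t a k -> Hmono_t a k -> 2 <= k -> 0 < c <= a 2 ->
  good a k phi [::] -> bad a k c phi al -> bad a k c phi be -> al = be.
Proof.
move=> Hp Hm Hk Hc Hg0 Hal Hbe.
have Hg := good_all Hp Hm Hk Hg0.
have Hsz : forall g, bad a k c phi g -> size g <= k - 2 by move=> g [/andP[]].
have Hpre : forall g h, bad a k c phi g -> bad a k c phi h -> prefix g h -> g = h.
  move=> g h Hbg Hbh /prefixP[w Ew]; case: w Ew => [|y w] Ew; first by rewrite Ew cats0.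
  exfalso.
  have Hd : prefix (rcons g y) h by rewrite Ew -cat_rcons prefix_prefix.
  have [N1 N2 N3] := bad_nnn Hp Hm Hk Hc Hbh Hd.
  have Hsg := Hsz g Hbg; have Hgg := Hg g ltac:(lia).
  move: Hgg; rewrite /good.
  have -> : k.-1 - size g = (k.-1 - size g).-1.+1 by lia.
  move=> Hgg; have [R1 _ R3 _ R5] := nnn_route Hgg N1 N2 N3.
  case: Hbg => [/andP[_ Hr] _ _ Hnc]; apply: Hnc.
  apply: (ph2_nonempty Hp Hm Hk Hr Hsg R1 R3 R5); lia.
case: (seq_cases al be) => [H|[H|[u [x [y [s' [t' [Hxy E1 E2]]]]]]]].
- exact: Hpre.
- by apply: esym; exact: Hpre.
exfalso; apply: Hxy.
have Hdx : prefix (rcons u x) al by rewrite E1 -cat_rcons prefix_prefix.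
have Hdy : prefix (rcons u y) be by rewrite E2 -cat_rcons prefix_prefix.
have [N1 N2 N3] := bad_nnn Hp Hm Hk Hc Hal Hdx.
have [M1 M2 M3] := bad_nnn Hp Hm Hk Hc Hbe Hdy.
have Hsu : size u < k - 2.
  by have := Hsz al Hal; rewrite E1 size_cat /=; lia.
have Hgu := Hg u ltac:(lia); move: Hgu; rewrite /good.
have -> : k.-1 - size u = (k.-1 - size u).-1.+1 by lia.
move=> Hgu.
have [R1 _ _ _ _] := nnn_route Hgu N1 N2 N3.
have [S1 _ _ _ _] := nnn_route Hgu M1 M2 M3.
case: (ltngtP x y) => // H.
- by exfalso; apply: N2; exact: S1.
- by exfalso; apply: M2; exact: R1.
Qed.

Lemma fill a k phi d : Hpos_t a k -> Hmono_t a k -> 2 <= k ->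
  in_range a k d -> size d <= k - 2 -> empty a k phi d ->
  NextR a k phi d (Defs.set1 phi (zext k d)).
Proof.
move=> Hp Hm Hk; move Et: (k - 2 - size d) => t.
elim: t d Et => [|t IH] d Et Hr Hs He.
  have E : zext k d = rcons d 0.
    rewrite -(@zext_rcons0 k d); last by lia.
    by rewrite zext_full // size_rcons; lia.
  rewrite E; apply: Next_leaf; first by lia.
  by split=> //; exact: empty_child.
have Ha := @a2le a k d Hm Hk Hs.
have Hap := a2pos Hp Hk.
apply: (@Next_small _ _ _ _ 0); first by lia.
- by split=> //; exact: empty_child.
- done.
rewrite -(@zext_rcons0 k d); last by lia.
apply: IH.
- by rewrite size_rcons; lia.
- by apply/inr_rcons; split=> //; lia.
- by rewrite size_rcons; lia.
- exact: empty_child.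
Qed.

Lemma least_ex (P : nat -> Prop) N : P N -> exists m, P m /\ forall i, i < m -> ~ P i.
Proof.
elim/ltn_ind: N => N IH HN.
case: (classic (exists i, i < N /\ P i)) => [[i [Hi Pi]]|H].
  exact: IH Hi Pi.
exists N; split=> // i Hi Pi; apply: H; by exists i.
Qed.

Lemma least_empty_ex a k phi b : exists m, least_empty a k phi b m.
Proof.
have [m [Hm Hlt]] := @least_ex (fun i => empty a k phi (rcons b i)) (a (k - size b))
  (@oor_empty a k phi _ (@child_oor a k b _ (leqnn _))).
exists m; split=> // i Hi; apply: NNPP; exact: Hlt i Hi.
Qed.

Lemma prefix_next (g al : seq nat) : prefix g al -> size g < size al ->
  exists i, prefix (rcons g i) al.
Proof.
move=> /prefixP[s Es] Hs; case: s Es => [|i s] Es.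
  by exfalso; move: Hs; rewrite Es cats0 ltnn.
by exists i; rewrite Es -cat_rcons prefix_prefix.
Qed.

Lemma route a k (c : nat) phi al p : Hpos_t a k -> Hmono_t a k -> 2 <= k -> 0 < c <= a 2 ->
  good a k phi [::] -> bad a k c phi al -> 2 <= p -> p <= c.-1 ->
  (forall i, i < p -> single a k phi (rcons al i)) ->
  (forall i, p <= i -> empty a k phi (rcons al i)) ->
  forall g : seq nat, prefix g al -> NextR a k phi g (Defs.set1 phi (zext k (rcons al p))).
Proof.
move=> Hp Hm Hk Hc Hg0 Hbad Hp2 Hpc H1 H2.
have Hg := good_all Hp Hm Hk Hg0.
have Hbad' := Hbad; case: Hbad' => [/andP[Hs Hr] _ _ _].
have Ha := @a2le a k al Hm Hk Hs.
have Hpr : in_range a k (rcons al p) by apply/inr_rcons; split=> //; lia.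
move=> g Hgal; move Et: (size al - size g) => t.
elim: t g Et Hgal => [|t IH] g Et Hgal.
  have Eg : g = al.
    move/prefixP: (Hgal) => [w Ew].
    have : size w = 0 by move: Et; rewrite Ew size_cat addKn.
    by case: w Ew => // Ew _; rewrite Ew cats0.
  subst g.
  have Hlep : least_empty a k phi al p.
    split; first exact: H2.
    move=> i Hi; apply: single_nonempty => //; last exact: H1.
      by apply/inr_rcons; split=> //; lia.
    by rewrite size_rcons; lia.
  case: (eqVneq (size al) (k - 2)) => Hsk.
    rewrite zext_full; last by rewrite size_rcons; lia.
    by apply: Next_leaf => //; lia.
  apply: (@Next_small _ _ _ _ p) => //; first by lia.
    lia.
  apply: fill => //; first by rewrite size_rcons; lia.
  exact: H2.
have Hsg : size g < size al by lia.
have [i Hi] := prefix_next Hgal Hsg.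
have [N1 N2 N3] := bad_nnn Hp Hm Hk Hc Hbad Hi.
have Hgle : size g <= k.-1.
  lia.
have Hgg := Hg g Hgle; move: Hgg; rewrite /good.
have -> : k.-1 - size g = (k.-1 - size g).-1.+1 by lia.
move=> Hgg; have [R1 _ R3 _ R5] := nnn_route Hgg N1 N2 N3.
have Hgr : in_range a k g := inr_prefix Hr Hgal.
have [m0 Hm0] := least_empty_ex a k phi g.
have Hm0a : a 2 <= m0.
  case: (leqP (a 2) m0) => // H; exfalso; apply: Hm0.1.
  apply: (ph2_nonempty Hp Hm Hk Hgr _ R1 R3 R5) => //; lia.
apply: (@Next_large _ _ _ _ m0 i); [lia | exact: Hm0 | exact: Hm0a | by split | ].
apply: IH => //; rewrite size_rcons; lia.
Qed.

Lemma after_step a k (c : nat) phi al p : Hpos_t a k -> Hmono_t a k -> 2 <= k -> 0 < c <= a 2 ->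
  good a k phi [::] -> bad a k c phi al -> 2 <= p -> p <= c.-1 ->
  (forall i, i < p -> single a k phi (rcons al i)) ->
  (forall be, bad a k c (Defs.set1 phi (zext k (rcons al p))) be -> be = al) /\
  (forall j, j <= p -> nonempty a k (Defs.set1 phi (zext k (rcons al p))) (rcons al j)).
Proof.
move=> Hp Hm Hk Hc Hg0 Hal Hp2 Hpc H1.
have Hal' := Hal; case: Hal' => [/andP[Hs Hr] Ha1 Hn1 Hnc].
have Ha := @a2le a k al Hm Hk Hs.
have Hpr : in_range a k (rcons al p) by apply/inr_rcons; split=> //; lia.
have Hxe : is_elem a k (zext k (rcons al p)) by apply: zext_elem => //; rewrite size_rcons; lia.
have Ex : zext k (rcons al p) = al ++ p :: nseq (k.-1 - (size al).+1) 0.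
  by rewrite /zext size_rcons cat_rcons.
split; last first.
  move=> j Hj; case: (ltnP j p) => Hjp.
    apply: nonempty_set1; apply: single_nonempty => //; last exact: H1.
      by apply/inr_rcons; split=> //; lia.
    by rewrite size_rcons; lia.
  have -> : j = p by lia.
  by apply: nonempty_set1x => //; exact: prefix_prefix.
move=> be [Hsp H1b Hn1b Hncb].
case: (classic (nonempty a k phi (rcons be 1))) => Hn.
  apply: (bad_unique Hp Hm Hk Hc Hg0 _ Hal); split=> //.
  by move=> H; apply: Hncb; apply: nonempty_set1.
exfalso.
case: Hn1b => y [Hy Hpy]; rewrite /Defs.set1; case/orP => [/eqP Ey|Hfy]; last first.
  by apply: Hn; exists y.
subst y.
have Hpal : prefix al (zext k (rcons al p)) by rewrite Ex prefix_prefix.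
have Hcase1 : ~ prefix (rcons be 1) al.
  move=> H; apply: Hn; apply: nonempty_prefix Hn1; apply: prefix_trans H _; exact: prefix_rcons.
case: (prefix_total Hpy Hpal) => // H.
move/prefixP: H => [w Ew].
case/lastP: w Ew => [|w' z] Ew.
  by apply: Hcase1; rewrite Ew cats0 prefix_refl.
rewrite -rcons_cat in Ew; have [_ Ez] := rcons_inj Ew; subst z.
move: Hpy; rewrite Ex Ew rcons_cat prefix_catr // eqxx /=.
case: w' {Ew} => [|z w''] /=.
  by case/andP=> /eqP; lia.
case/andP=> _; move/prefix_nseq0 => //.
Qed.

Lemma no_bad_kc a k (c : nat) phi : (forall al, ~ bad a k c phi al) -> Kc_connected a k c phi.
Proof.
move=> H al Hsp H1 Hn1; apply: NNPP => Hnc; exact: H al (And4 Hsp H1 Hn1 Hnc).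
Qed.

Lemma mainQ a k (c : nat) n : Hpos_t a k -> Hmono_t a k -> 2 <= k -> 0 < c <= a 2 ->
  forall phi, good a k phi [::] ->
  (forall al, bad a k c phi al -> nonempty a k phi (rcons al (c.-1 - n))) ->
  exists j, j <= n /\ exists psi, IterNext a k j phi psi /\ Kc_connected a k c psi.
Proof.
move=> Hp Hm Hk Hc; elim: n => [|n IH] phi Hg Hh.
  exists 0; split=> //; exists phi; split; first exact: Iter0.
  apply: no_bad_kc => al Hal; have := Hh al Hal; rewrite subn0.
  by case: Hal.
case: (classic (exists al, bad a k c phi al)) => [[al Hal]|Hnb]; last first.
  exists 0; split=> //; exists phi; split; first exact: Iter0.
  by apply: no_bad_kc => al Hal; apply: Hnb; exists al.
have Hal' := Hal; case: Hal' => [/andP[Hs Hr] _ _ _].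
have Hga : good a k phi al := good_all Hp Hm Hk Hg (b:=al) ltac:(lia).
have [p [Hp2 Hpc H1 H2]] := bad_shape Hp Hm Hk Hc Hga Hal.
have HN := route Hp Hm Hk Hc Hg Hal Hp2 Hpc H1 H2 (prefix0s al).
set phi' := Defs.set1 phi (zext k (rcons al p)) in HN.
have [A B] := after_step Hp Hm Hk Hc Hg Hal Hp2 Hpc H1.
have Hlt : c.-1 - n.+1 < p.
  case: (ltnP (c.-1 - n.+1) p) => // H; exfalso.
  exact: (H2 _ H) (Hh al Hal).
have Hg' : good a k phi' [::].
  by have [_ [_ H]] := pres Hp Hm Hk HN erefl Hg.
have HB : nonempty a k phi' (rcons al (c.-1 - n)) by apply: B; lia.
have HH : forall be, bad a k c phi' be -> nonempty a k phi' (rcons be (c.-1 - n)).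
  by move=> be Hbe; rewrite (A be Hbe).
have [j [Hj [psi [Hit Hkc]]]] := IH phi' Hg' HH.
exists j.+1; split; first by lia.
exists psi; split=> //; exact: IterS HN Hit.
Qed.

Theorem corollary2 (k : nat) (a : nat -> nat) (c : nat) (phi : listing) :
  2 <= k ->
  (forall i, 2 <= i <= k -> 0 < a i) ->
  (forall i, 2 < i <= k -> a 2 <= a i) ->
  0 < c <= a 2 ->
  partial_listing a k phi ->
  exists j, j <= c - 2 /\
    exists psi, IterNext a k j phi psi /\ Kc_connected a k c psi.
Proof.
move=> Hk Hp Hm Hc [n Hit].
have Hg0 : good a k zero_listing [::].
  by apply: good_empty => -[y [_ _]].
have Hg := iter_good Hp Hm Hk Hit Hg0.
apply: (mainQ Hp Hm Hk Hc Hg) => al Hal.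
have Hal' := Hal; case: Hal' => [/andP[Hs Hr] _ Hn1 _].
have Hga : good a k phi al := good_all Hp Hm Hk Hg (b:=al) ltac:(lia).
have [p [Hp2 Hpc _ _]] := bad_shape Hp Hm Hk Hc Hga Hal.
by have -> : c.-1 - (c - 2) = 1 by lia.
Qed.
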